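(* Let $S$ be a T2R semigroup, with $S=S_0\cup S_1$ as in the definition, and let $b\in S$ be an element such that $|J_b|=2$ and $I(b)=\{0\}$. Then for every $x,y\in S^1$, either $0\notin xJ_by$ or $xJ_by=\{0\}$. Moreover, $J_bS_0=S_0J_b=\{0\}$, and either $S_1J_b=\{0\}$ or $S_1J_b=J_b$.
   Context: A semigroup $S$ is a $\Delta$-semigroup if the lattice of all congruences of $S$ is a chain with respect to inclusion. A semigroup $N$ with zero $0$ is nil if every element has some power equal to $0$; non-trivial means having more than one element. A T2R semigroup is a $\Delta$-semigroup $S$ which is the disjoint union of a non-trivial nil ideal $S_0$ (with zero $0$, which is then the zero of $S$) and a subsemigroup $S_1$ which is a two-element right zero semigroup (i.e. $S_1=\{u,v\}$ with $xy=y$ for $x,y\in S_1$). $S^1$ denotes $S$ with an identity $1$ adjoined. For $a\in S$: $J(a)=S^1aS^1$, $J_a=\{s\in S:J(s)=J(a)\}$, $I(a)=J(a)\setminus J_a$. Products of elements with sets are taken elementwise, e.g. $xAy=\{xay:a\in A\}$, $AB=\{ab: a\in A, b\in B\}$. *)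

(* Defs.v *)
Set Implicit Arguments.

Section Semigroups.
Variable T : Type.
Variable mul : T -> T -> T.

Definition associative_op : Prop :=
  forall x y w, mul x (mul y w) = mul (mul x y) w.

Definition is_congruence (r : T -> T -> Prop) : Prop :=
  (forall x, r x x) /\
  (forall x y, r x y -> r y x) /\
  (forall x y w, r x y -> r y w -> r x w) /\
  (forall x y w, r x y -> r (mul w x) (mul w y) /\ r (mul x w) (mul y w)).

Definition Delta_semigroup : Prop :=
  associative_op /\
  forall r s : T -> T -> Prop, is_congruence r -> is_congruence s ->
    (forall x y, r x y -> s x y) \/ (forall x y, s x y -> r x y).

(* powers x^(n+1) *)
Fixpoint pow (x : T) (n : nat) : T :=
  match n with O => x | S k => mul x (pow x k) end.

(* T2R semigroups: S = S0 (disjoint) union {u, v} *)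
Definition T2R (z : T) (S0 : T -> Prop) (u v : T) : Prop :=
  Delta_semigroup /\
  (forall x s, S0 x -> S0 (mul x s) /\ S0 (mul s x)) /\
  S0 z /\ (forall x, S0 x -> mul z x = z /\ mul x z = z) /\
  (forall x, S0 x -> exists n, pow x n = z) /\
  (exists x, S0 x /\ x <> z) /\
  u <> v /\ ~ S0 u /\ ~ S0 v /\
  mul u u = u /\ mul u v = v /\ mul v u = u /\ mul v v = v /\
  (forall x, S0 x \/ x = u \/ x = v).

(* S^1: None is the adjoined identity *)
Definition mul1 (x y : option T) : option T :=
  match x, y with
  | None, _ => y
  | _, None => x
  | Some a, Some b => Some (mul a b)
  end.

Definition mul3 (x : option T) (a : T) (y : option T) : T :=
  match mul1 (mul1 x (Some a)) y with Some c => c | None => a end.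

Definition Jideal (a : T) : T -> Prop :=
  fun s => exists x y : option T, s = mul3 x a y.

Definition Jclass (a : T) : T -> Prop :=
  fun s => forall t, Jideal s t <-> Jideal a t.

Definition Iideal (a : T) : T -> Prop :=
  fun s => Jideal a s /\ ~ Jclass a s.

End Semigroups.

Definition set_eq {T} (A B : T -> Prop) : Prop := forall s, A s <-> B s.
Definition has_two_elements {T} (A : T -> Prop) : Prop :=
  exists p q, p <> q /\ forall s, A s <-> (s = p \/ s = q).

(* Main.v *)
Require Import Defs.
From Stdlib Require Import Classical.
Set Implicit Arguments.

Lemma pow_left_aux (T : Type) (mul : T -> T -> T)
  (assoc : forall x y w, mul x (mul y w) = mul (mul x y) w)
  (m a : T) (g : T -> T) :
  (forall e f, g (mul e f) = mul e (g f)) -> a = mul m (g a) ->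
  forall k, a = mul (pow mul m k) (Nat.iter (S k) g a).
Proof.
  intros Hg Ha k; induction k as [|k IH].
  - exact Ha.
  - simpl pow. change (Nat.iter (S (S k)) g a) with (g (Nat.iter (S k) g a)).
    rewrite <- assoc, <- Hg, <- IH. exact Ha.
Qed.

Lemma pow_comm (T : Type) (mul : T -> T -> T)
  (assoc : forall x y w, mul x (mul y w) = mul (mul x y) w) m k :
  mul (pow mul m k) m = mul m (pow mul m k).
Proof.
  induction k as [|k IH]; simpl; [reflexivity|].
  rewrite <- assoc, IH. reflexivity.
Qed.

Lemma iter_comm_r (T : Type) (mul : T -> T -> T) (h : T -> T) :
  (forall e f, h (mul e f) = mul (h e) f) ->
  forall n X m, Nat.iter n h (mul X m) = mul (Nat.iter n h X) m.
Proof.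
  intros Hh n; induction n as [|n IH]; intros X m; simpl; [reflexivity|].
  rewrite IH, Hh. reflexivity.
Qed.

Lemma pow_right_aux (T : Type) (mul : T -> T -> T)
  (assoc : forall x y w, mul x (mul y w) = mul (mul x y) w)
  (m a : T) (h : T -> T) :
  (forall e f, h (mul e f) = mul (h e) f) -> a = h (mul a m) ->
  forall k, a = Nat.iter (S k) h (mul a (pow mul m k)).
Proof.
  intros Hh Ha k; induction k as [|k IH].
  - exact Ha.
  - change (Nat.iter (S (S k)) h (mul a (pow mul m (S k))))
      with (h (Nat.iter (S k) h (mul a (mul m (pow mul m k))))).
    rewrite <- (pow_comm mul assoc), assoc, (iter_comm_r mul h Hh), <- IH.
    exact Ha.
Qed.

Lemma iter_fix (T : Type) (h : T -> T) z : h z = z -> forall n, Nat.iter n h z = z.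
Proof. intros H n; induction n; simpl; [reflexivity|]. rewrite IHn; exact H. Qed.

Definition lm (T : Type) (mul : T -> T -> T) (x : option T) (e : T) : T :=
  match x with None => e | Some s => mul s e end.
Definition rm (T : Type) (mul : T -> T -> T) (e : T) (y : option T) : T :=
  match y with None => e | Some s => mul e s end.

Lemma mul3_eq (T : Type) (mul : T -> T -> T) x a y :
  mul3 mul x a y = rm mul (lm mul x a) y.
Proof. destruct x, y; reflexivity. Qed.

Theorem proposition2 (T : Type) (mul : T -> T -> T) (z : T) (S0 : T -> Prop)
    (u v b : T) :
  T2R mul z S0 u v ->
  has_two_elements (Jclass mul b) ->
  set_eq (Iideal mul b) (fun s => s = z) ->
  (forall x y : option T,
      (~ exists a, Jclass mul b a /\ mul3 mul x a y = z) \/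
      set_eq (fun s => exists a, Jclass mul b a /\ s = mul3 mul x a y)
             (fun s => s = z)) /\
  set_eq (fun s => exists a c, Jclass mul b a /\ S0 c /\ s = mul a c)
         (fun s => s = z) /\
  set_eq (fun s => exists c a, S0 c /\ Jclass mul b a /\ s = mul c a)
         (fun s => s = z) /\
  (set_eq (fun s => exists c a, (c = u \/ c = v) /\ Jclass mul b a /\ s = mul c a)
          (fun s => s = z) \/
   set_eq (fun s => exists c a, (c = u \/ c = v) /\ Jclass mul b a /\ s = mul c a)
          (Jclass mul b)).
Proof.
  intros HT _ HI.
  destruct HT as [[Hassoc _] [Hid [Hz0 [Hzz [Hnil [_ [Huv [Hu0 [Hv0
    [Huu [Huv' [Hvu [Hvv Hall]]]]]]]]]]]]].
  set (J := Jclass mul b) in *.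
  assert (Hzero : forall s, mul z s = z /\ mul s z = z).
  { intro s. split.
    - destruct (Hid z s Hz0) as [H1 _].
      transitivity (mul z (mul z s)).
      + rewrite Hassoc. rewrite (proj1 (Hzz z Hz0)). reflexivity.
      + apply Hzz; exact H1.
    - destruct (Hid z s Hz0) as [_ H1].
      transitivity (mul (mul s z) z).
      + rewrite <- Hassoc. rewrite (proj1 (Hzz z Hz0)). reflexivity.
      + apply Hzz; exact H1. }
  assert (HJz : forall a, J a -> a <> z).
  { intros a Ha E. subst a. apply (proj2 (HI z) eq_refl). exact Ha. }
  assert (HJJ : forall a a', J a -> J a' -> Jideal mul a' a).
  { intros a a' Ha Ha'. apply (proj2 (Ha' a)). apply (proj1 (Ha a)).
    exists None, None. reflexivity. }
  assert (HinJ : forall a s, J a -> Jideal mul a s -> s = z \/ J s).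
  { intros a s Ha Hs. destruct (classic (J s)) as [Hc|Hc]; [right; exact Hc|left].
    apply HI. split; [apply (proj1 (Ha s)); exact Hs | exact Hc]. }
  assert (HL1 : forall a c, J a -> mul c a = z \/ J (mul c a)).
  { intros a c Ha. apply (HinJ a); [exact Ha|]. exists (Some c), None; reflexivity. }
  assert (HR1 : forall a c, J a -> mul a c = z \/ J (mul a c)).
  { intros a c Ha. apply (HinJ a); [exact Ha|]. exists None, (Some c); reflexivity. }
  assert (HS0J : forall w a, S0 w -> J a -> mul w a = z).
  { intros w a Hw Ha. destruct (HL1 a w Ha) as [E|Hwa]; [exact E|exfalso].
    destruct (HJJ a (mul w a) Ha Hwa) as [x [y Ey]].
    rewrite mul3_eq in Ey.
    set (m := lm mul x w).
    assert (Hm : S0 m).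
    { unfold m; destruct x; simpl; [first [apply (proj1 (Hid _ _ Hw)) | apply (proj2 (Hid _ _ Hw))]|exact Hw]. }
    assert (Ea : a = mul m (rm mul a y)).
    { rewrite Ey at 1. unfold m. destruct x, y; simpl; repeat rewrite Hassoc; reflexivity. }
    destruct (Hnil m Hm) as [n Hn].
    pose proof (@pow_left_aux T mul Hassoc m a (fun e => rm mul e y)) as P.
    assert (Hg : forall e f, rm mul (mul e f) y = mul e (rm mul f y)).
    { intros e f; destruct y; simpl; [rewrite Hassoc|]; reflexivity. }
    specialize (P Hg Ea n). rewrite Hn, (proj1 (Hzero _)) in P.
    exact (HJz a Ha P). }
  assert (HJS0 : forall w a, S0 w -> J a -> mul a w = z).
  { intros w a Hw Ha. destruct (HR1 a w Ha) as [E|Hwa]; [exact E|exfalso].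
    destruct (HJJ a (mul a w) Ha Hwa) as [x [y Ey]].
    rewrite mul3_eq in Ey.
    set (m := rm mul w y).
    assert (Hm : S0 m).
    { unfold m; destruct y; simpl; [first [apply (proj1 (Hid _ _ Hw)) | apply (proj2 (Hid _ _ Hw))]|exact Hw]. }
    assert (Ea : a = lm mul x (mul a m)).
    { rewrite Ey at 1. unfold m. destruct x, y; simpl; repeat rewrite Hassoc; reflexivity. }
    destruct (Hnil m Hm) as [n Hn].
    assert (Hh : forall e f, lm mul x (mul e f) = mul (lm mul x e) f).
    { intros e f; destruct x; simpl; [rewrite Hassoc|]; reflexivity. }
    pose proof (@pow_right_aux T mul Hassoc m a (lm mul x) Hh Ea n) as P.
    rewrite Hn, (proj2 (Hzero _)), iter_fix in P.
    - exact (HJz a Ha P).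
    - destruct x; simpl; [apply Hzero|reflexivity]. }
  assert (Hrz : forall s c, (s = u \/ s = v) -> (c = u \/ c = v) -> mul s c = c).
  { intros s c [-> | ->] [-> | ->]; assumption. }
  assert (Hlm : forall x e f, mul (lm mul x e) f = lm mul x (mul e f)).
  { intros [s|] e f; simpl; [rewrite Hassoc|]; reflexivity. }
  assert (Hrm : forall y e f, rm mul (mul e f) y = mul e (rm mul f y)).
  { intros [s|] e f; simpl; [rewrite Hassoc|]; reflexivity. }
  assert (Hrmz : forall y, rm mul z y = z).
  { intros [s|]; simpl; [apply Hzero|reflexivity]. }
  assert (Hlmz : forall x, lm mul x z = z).
  { intros [s|]; simpl; [apply Hzero|reflexivity]. }
  assert (HS1L : forall c a a', (c = u \/ c = v) -> J a -> J a' ->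
            mul c a = z -> mul c a' = z).
  { intros c a a' Hc Ha Ha' Hca.
    destruct (HL1 a' c Ha') as [E|Hca']; [exact E|exfalso].
    destruct (HJJ a (mul c a') Ha Hca') as [x [y Ey]].
    rewrite mul3_eq in Ey.
    assert (E2 : a = rm mul (mul c a') y).
    { destruct x as [s|]; [|exact Ey]. simpl in Ey.
      destruct (Hall s) as [Hs|Hs].
      - rewrite (HS0J s _ Hs Hca'), Hrmz in Ey. exfalso; exact (HJz a Ha Ey).
      - rewrite Hassoc, (Hrz s c Hs Hc) in Ey. exact Ey. }
    rewrite Hrm in E2.
    apply (HJz a Ha). rewrite <- Hca. rewrite E2 at 2.
    rewrite Hassoc. destruct Hc as [-> | ->]; [rewrite Huu|rewrite Hvv]; exact E2. }
  assert (HLany : forall c a a', J a -> J a' -> mul c a = z -> mul c a' = z).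
  { intros c a a' Ha Ha' Hca. destruct (Hall c) as [Hc|Hc].
    - apply HS0J; assumption.
    - exact (HS1L c a a' Hc Ha Ha' Hca). }
  assert (HS1R : forall c a a', (c = u \/ c = v) -> J a -> J a' ->
            mul a c = z -> mul a' c = z).
  { intros c a a' Hc Ha Ha' Hac.
    destruct (HR1 a' c Ha') as [E|Ha'c]; [exact E|exfalso].
    destruct (HJJ a (mul a' c) Ha Ha'c) as [x [y Ey]].
    rewrite mul3_eq in Ey.
    destruct y as [t|]; simpl in Ey.
    - destruct (Hall t) as [Ht|Ht].
      + assert (Hx : lm mul x (mul a' c) = z \/ J (lm mul x (mul a' c))).
        { destruct x as [s|]; simpl; [apply HL1; exact Ha'c|right; exact Ha'c]. }
        destruct Hx as [Hx|Hx].
        * rewrite Hx, (proj1 (Hzero t)) in Ey. exact (HJz a Ha Ey).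
        * rewrite (HJS0 t _ Ht Hx) in Ey. exact (HJz a Ha Ey).
      + rewrite Hlm, <- Hassoc, (Hrz c t Hc Ht) in Ey.
        assert (Eac : mul a c = lm mul x (mul a' c)).
        { rewrite Ey, Hlm, <- Hassoc, (Hrz t c Ht Hc). reflexivity. }
        destruct x as [s|]; simpl in Ey, Eac.
        * destruct (HR1 a' t Ha') as [Ha't|Ha't].
          { rewrite Ha't, (proj2 (Hzero s)) in Ey. exact (HJz a Ha Ey). }
          destruct (Hall s) as [Hs|Hs].
          { rewrite (HS0J s _ Hs Ha't) in Ey. exact (HJz a Ha Ey). }
          apply (HJz a Ha). rewrite Ey.
          apply (HS1L s (mul a' c) (mul a' t) Hs Ha'c Ha't). congruence.
        * apply (HJz _ Ha'c). congruence.
    - destruct x as [s|]; simpl in Ey.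
      + apply (HJz a Ha). transitivity (mul a c); [|exact Hac]. rewrite Ey at 2. rewrite <- ?Hassoc, (Hrz c c Hc Hc). exact Ey.
      + apply (HJz a Ha). transitivity (mul a c); [|exact Hac]. rewrite Ey at 2. rewrite <- ?Hassoc, (Hrz c c Hc Hc). exact Ey. }
  assert (HRany : forall c a a', J a -> J a' -> mul a c = z -> mul a' c = z).
  { intros c a a' Ha Ha' Hac. destruct (Hall c) as [Hc|Hc].
    - apply HJS0; assumption.
    - exact (HS1R c a a' Hc Ha Ha' Hac). }
  assert (Hc1 : forall x y a a', J a -> J a' -> mul3 mul x a y = z -> mul3 mul x a' y = z).
  { intros x y a a' Ha Ha' H. rewrite mul3_eq in *.
    destruct x as [c|]; simpl in *.
    - destruct (HL1 a c Ha) as [Hca|Hca].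
      + rewrite (HLany c a a' Ha Ha' Hca). apply Hrmz.
      + destruct (HL1 a' c Ha') as [Hca'|Hca'].
        * exfalso. apply (HJz _ Hca). exact (HLany c a' a Ha' Ha Hca').
        * destruct y as [d|]; simpl in *.
          -- exact (HRany d _ _ Hca Hca' H).
          -- exfalso; exact (HJz _ Hca H).
    - destruct y as [d|]; simpl in *.
      + exact (HRany d _ _ Ha Ha' H).
      + exfalso; exact (HJz _ Ha H). }
  assert (Hb : J b). { intro t; tauto. }
  split; [|split; [|split]].
  - intros x y. destruct (classic (exists a, J a /\ mul3 mul x a y = z)) as [[a0 [Ha0 E0]]|Hn].
    + right. intro s; split.
      * intros [a [Ha ->]]. exact (Hc1 x y a0 a Ha0 Ha E0).
      * intros ->. exists a0. split; [exact Ha0|symmetry; exact E0].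
    + left; exact Hn.
  - intro s; split.
    + intros [a [c [Ha [Hc ->]]]]. apply HJS0; assumption.
    + intros ->. exists b, z. split; [exact Hb|split; [exact Hz0|symmetry; apply Hzero]].
  - intro s; split.
    + intros [c [a [Hc [Ha ->]]]]. apply HS0J; assumption.
    + intros ->. exists z, b. split; [exact Hz0|split; [exact Hb|symmetry; apply Hzero]].
  - destruct (HL1 b u Hb) as [Hub|Hub].
    + left. intro s; split.
      * intros [c [a [Hc [Ha ->]]]]. destruct Hc as [->| ->].
        -- exact (HLany u b a Hb Ha Hub).
        -- destruct (HL1 a v Ha) as [Hva|Hva]; [exact Hva|].
           rewrite <- Huv', <- Hassoc. rewrite (HLany u b _ Hb Hva Hub). reflexivity.
      * intros ->. exists u, b. split; [left; reflexivity|split; [exact Hb|symmetry; exact Hub]].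
    + right. intro s; split.
      * intros [c [a [Hc [Ha ->]]]].
        destruct (HL1 a c Ha) as [Hca|Hca]; [exfalso|exact Hca].
        destruct Hc as [-> | ->].
        -- apply (HJz _ Hub). exact (HLany u a b Ha Hb Hca).
        -- apply (HJz _ Hub). rewrite <- Hvu, <- Hassoc. exact (HLany v a _ Ha Hub Hca).
      * intro Hs. destruct (HJJ s (mul u b) Hs Hub) as [x [y Ey]].
        rewrite mul3_eq in Ey.
        assert (E2 : s = rm mul (mul u b) y).
        { destruct x as [t|]; [|exact Ey]. simpl in Ey.
          destruct (Hall t) as [Ht|Ht].
          - rewrite (HS0J t _ Ht Hub), Hrmz in Ey. exfalso; exact (HJz s Hs Ey).
          - rewrite Hassoc, (Hrz t u Ht (or_introl eq_refl)) in Ey. exact Ey. }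
        rewrite Hrm in E2.
        exists u, (rm mul b y). split; [left; reflexivity|split; [|exact E2]].
        destruct (HinJ b (rm mul b y) Hb) as [Hz|Hz]; [| |exact Hz].
        -- exists None, y. destruct y; reflexivity.
        -- exfalso. rewrite Hz, (proj2 (Hzero u)) in E2. exact (HJz s Hs E2).
Qed.
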